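(* Let $N$ be a bidirected Manhattan network on $T$ such that the boundary of every strip is contained in $N$ and is directed in $N$ as a directed cycle (clockwise or counterclockwise). Then any two strips belonging to the same block are compatible.
   Context: $T$ is a finite set of points (terminals) in the plane, no two on a common horizontal or vertical line. For points $p,q$, $R(p,q)$ is the smallest closed axis-parallel rectangle containing $p$ and $q$; for ${\bf t}_i,{\bf t}_j\in T$, $R_{i,j}=R({\bf t}_i,{\bf t}_j)$, and $R_{i,j}$ is empty if $R_{i,j}\cap T=\{{\bf t}_i,{\bf t}_j\}$. $\Gamma(T)$ is the grid formed by the horizontal and vertical lines through the terminals, restricted to the bounding box of $T$ (vertices: intersection points of these lines; edges: segments between consecutive vertices on a line). An oriented subnetwork of $\Gamma(T)$ is a set of edges of $\Gamma(T)$ each directed in exactly one sense; a directed Manhattan path from $p$ to $q$ is a directed path in it of length $|p^x-q^x|+|p^y-q^y|$. A bidirected Manhattan network on $T$ is an oriented subnetwork of $\Gamma(T)$ containing a directed Manhattan path from $t$ to $t'$ for every ordered pair of distinct terminals $t,t'\in T$. An empty rectangle $R_{i,j}$ is a vertical strip if ${\bf t}_i^x,{\bf t}_j^x$ are consecutive in the sorted list of $x$-coordinates of $T$, and a horizontal strip if ${\bf t}_i^y,{\bf t}_j^y$ are consecutive in the sorted list of $y$-coordinates of $T$; a strip is a vertical or horizontal strip. $R_{i,j}$ has positive slope if $({\bf t}_i^x-{\bf t}_j^x)({\bf t}_i^y-{\bf t}_j^y)>0$, negative slope otherwise. Two strips (whose boundaries are directed cycles) are compatible if they have the same slope and the same orientation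 (both clockwise or both counterclockwise), or different slopes and opposite orientations. Quadrants: $Q_1(p)=\{q:q^x\ge p^x,q^y\ge p^y\}$, $Q_2(p)=\{q:q^x\le p^x,q^y\ge p^y\}$, $Q_3(p)=\{q:q^x\le p^x,q^y\le p^y\}$, $Q_4(p)=\{q:q^x\ge p^x,q^y\le p^y\}$. Blocks: let $P_{24}=\{t\in T: Q_2(t)\cap T=Q_4(t)\cap T=\{t\}\}$ and $P_{13}=\{t\in T:Q_1(t)\cap T=Q_3(t)\cap T=\{t\}\}$. If $P_{24}\ne\emptyset$, sort it by $x$-coordinate as $p_1,\dots,p_m$; the blocks are $T\cap Q_3(p_1)$, $T\cap R(p_a,p_{a+1})$ for $1\le a<m$, and $T\cap Q_1(p_m)$. If $P_{24}=\emptyset\ne P_{13}$, sort $P_{13}$ by $x$-coordinate as $p_1,\dots,p_m$; the blocks are $T\cap Q_2(p_1)$, $T\cap R(p_a,p_{a+1})$ for $1\le a<m$, and $T\cap Q_4(p_m)$. If both are empty, $T$ itself is the only block. A strip $R_{i,j}$ belongs to a block $B$ if ${\bf t}_i,{\bf t}_j\in B$. *)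

(* Defs.v *)
From HB Require Import structures.
From mathcomp Require Import all_boot all_order all_algebra.
Set Implicit Arguments. Unset Strict Implicit. Unset Printing Implicit Defensive.
Import Order.TTheory GRing.Theory Num.Theory.
Local Open Scope ring_scope.

Section Manhattan.
Variables (R : realFieldType) (n : nat) (x y : 'I_n -> R).

(* vertices of the grid Gamma(T): (a,b) denotes the point (x a, y b);
   terminal t_k is the vertex (k,k). *)
Definition vtx := ('I_n * 'I_n)%type.
Definition vx (v : vtx) : R := x v.1.
Definition vy (v : vtx) : R := y v.2.

Definition consec_x (a b : 'I_n) : Prop :=
  x a != x b /\ forall c, ~ (Num.min (x a) (x b) < x c < Num.max (x a) (x b)).
Definition consec_y (a b : 'I_n) : Prop :=
  y a != y b /\ forall c, ~ (Num.min (y a) (y b) < y c < Num.max (y a) (y b)).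

Definition grid_edge (u v : vtx) : Prop :=
  (u.2 = v.2 /\ consec_x u.1 v.1) \/ (u.1 = v.1 /\ consec_y u.2 v.2).

Definition oriented_subnetwork (N : rel vtx) : Prop :=
  forall u v, N u v -> grid_edge u v /\ ~~ N v u.

Definition dist1 (u v : vtx) : R := `|vx u - vx v| + `|vy u - vy v|.

Fixpoint plen (p : vtx) (s : seq vtx) : R :=
  match s with [::] => 0 | v :: s' => dist1 p v + plen v s' end.

Definition manhattan_path (N : rel vtx) (p q : vtx) : Prop :=
  exists s : seq vtx, [/\ path N p s, last p s = q & plen p s = dist1 p q].

Definition term (k : 'I_n) : vtx := (k, k).

Definition bidirected_manhattan (N : rel vtx) : Prop :=
  oriented_subnetwork N /\
  forall t t' : 'I_n, t != t' -> manhattan_path N (term t) (term t').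

Definition in_rect (i j : 'I_n) (px py : R) : Prop :=
  Num.min (x i) (x j) <= px <= Num.max (x i) (x j) /\
  Num.min (y i) (y j) <= py <= Num.max (y i) (y j).

Definition empty_rect (i j : 'I_n) : Prop :=
  i != j /\ forall k, in_rect i j (x k) (y k) -> k = i \/ k = j.

Definition vstrip (i j : 'I_n) : Prop := empty_rect i j /\ consec_x i j.
Definition hstrip (i j : 'I_n) : Prop := empty_rect i j /\ consec_y i j.
Definition strip (i j : 'I_n) : Prop := vstrip i j \/ hstrip i j.

Definition pos_slope (i j : 'I_n) : Prop := 0 < (x i - x j) * (y i - y j).

(* u -> v is a grid edge on the boundary of R_{i,j}, traversed counterclockwise
   (bottom side left to right, right side upwards, top side right to left,
   left side downwards) *)
Definition ccw_side (i j : 'I_n) (u v : vtx) : Prop :=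
  let xl := Num.min (x i) (x j) in let xr := Num.max (x i) (x j) in
  let yb := Num.min (y i) (y j) in let yt := Num.max (y i) (y j) in
  [\/ [/\ u.2 = v.2, vy u = yb, vx u < vx v & xl <= vx u /\ vx v <= xr],
      [/\ u.1 = v.1, vx u = xr, vy u < vy v & yb <= vy u /\ vy v <= yt],
      [/\ u.2 = v.2, vy u = yt, vx v < vx u & xl <= vx v /\ vx u <= xr] |
      [/\ u.1 = v.1, vx u = xl, vy v < vy u & yb <= vy v /\ vy u <= yt]].

Definition boundary_ccw (N : rel vtx) (i j : 'I_n) : Prop :=
  forall u v, grid_edge u v -> ccw_side i j u v -> N u v.
Definition boundary_cw (N : rel vtx) (i j : 'I_n) : Prop :=
  forall u v, grid_edge u v -> ccw_side i j u v -> N v u.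

Definition boundary_directed_cycle (N : rel vtx) (i j : 'I_n) : Prop :=
  boundary_ccw N i j \/ boundary_cw N i j.

Definition compatible (N : rel vtx) (i j k l : 'I_n) : Prop :=
  ((pos_slope i j <-> pos_slope k l) /\
     ((boundary_ccw N i j /\ boundary_ccw N k l) \/
      (boundary_cw N i j /\ boundary_cw N k l)))
  \/
  (~ (pos_slope i j <-> pos_slope k l) /\
     ((boundary_ccw N i j /\ boundary_cw N k l) \/
      (boundary_cw N i j /\ boundary_ccw N k l))).

(* quadrants, restricted to terminals: t_k in Q_m(t_p) *)
Definition inQ1 (p k : 'I_n) : Prop := x p <= x k /\ y p <= y k.
Definition inQ2 (p k : 'I_n) : Prop := x k <= x p /\ y p <= y k.
Definition inQ3 (p k : 'I_n) : Prop := x k <= x p /\ y k <= y p.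
Definition inQ4 (p k : 'I_n) : Prop := x p <= x k /\ y k <= y p.

Definition inP24 (t : 'I_n) : Prop :=
  forall k, (inQ2 t k \/ inQ4 t k) -> k = t.
Definition inP13 (t : 'I_n) : Prop :=
  forall k, (inQ1 t k \/ inQ3 t k) -> k = t.

Definition first_x (P : 'I_n -> Prop) (p : 'I_n) : Prop :=
  P p /\ forall r, P r -> x p <= x r.
Definition last_x (P : 'I_n -> Prop) (p : 'I_n) : Prop :=
  P p /\ forall r, P r -> x r <= x p.
Definition next_x (P : 'I_n -> Prop) (p q : 'I_n) : Prop :=
  [/\ P p, P q, x p < x q & forall r, P r -> ~ (x p < x r < x q)].

Definition rect_set (p q : 'I_n) : {set 'I_n} :=
  [set k | (Num.min (x p) (x q) <= x k <= Num.max (x p) (x q)) &&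
           (Num.min (y p) (y q) <= y k <= Num.max (y p) (y q))].

Definition is_block (B : {set 'I_n}) : Prop :=
  [\/ (exists t, inP24 t) /\
       [\/ exists p, first_x inP24 p /\ B = [set k | (x k <= x p) && (y k <= y p)],
           exists p q, next_x inP24 p q /\ B = rect_set p q |
           exists p, last_x inP24 p /\ B = [set k | (x p <= x k) && (y p <= y k)]],
      [/\ ~ (exists t, inP24 t), (exists t, inP13 t) &
       [\/ exists p, first_x inP13 p /\ B = [set k | (x k <= x p) && (y p <= y k)],
           exists p q, next_x inP13 p q /\ B = rect_set p q |
           exists p, last_x inP13 p /\ B = [set k | (x p <= x k) && (y k <= y p)]]] |
      [/\ ~ (exists t, inP24 t), ~ (exists t, inP13 t) & B = [set: 'I_n]]].

End Manhattan.

(* Main.v *)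
Require Import Defs.
From HB Require Import structures.
From mathcomp Require Import all_boot all_order all_algebra.
From mathcomp Require Import ring lra.
From Stdlib Require Import Classical.
Import Order.TTheory GRing.Theory Num.Theory.
Local Open Scope ring_scope.

Ltac dA := repeat match goal with H : is_true (_ && _) |- _ => case/andP: H => ? ? end.

Section Gen.
Variables (R : realFieldType) (n : nat) (f : 'I_n -> R).
Hypothesis hf : injective f.

Lemma mmlt (a b : R) : a < b -> Num.min a b = a /\ Num.max a b = b.
Proof. by move=> h; rewrite min_l ?max_r // ltW. Qed.
Lemma mmgt (a b : R) : b < a -> Num.min a b = b /\ Num.max a b = a.
Proof. by move=> h; rewrite min_r ?max_l // ltW. Qed.
Arguments mmlt {a b}. Arguments mmgt {a b}.


Definition btw a b c := Num.min (f a) (f b) < f c < Num.max (f a) (f b).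

Lemma btwP a b c : btw a b c <-> (f a < f c < f b) \/ (f b < f c < f a).
Proof.
rewrite /btw; case: (ltgtP (f a) (f b)) => h.
- by split; [left|case=> //; move=>/andP[*]; lra].
- by split; [right|case=> //; move=>/andP[*]; lra].
- split; [move=>/andP[*]; lra| case=>/andP[*]; lra].
Qed.

Lemma fneq {a b} : a != b -> f a != f b.
Proof. by apply: contra => /eqP /hf ->. Qed.

Lemma consecP a b : consec_x f a b <-> a != b /\ forall c, ~ btw a b c.
Proof.
rewrite /consec_x; split => -[h1 h2]; split => //.
- by apply: contra h1 => /eqP ->.
- exact: fneq.
Qed.

Lemma consec_sym a b : consec_x f a b -> consec_x f b a.
Proof.
move=> [h1 h2]; split; first by rewrite eq_sym.
by move=> c; rewrite minC maxC; apply: h2.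
Qed.

Lemma consec_uniq b c c' : consec_x f b c -> consec_x f b c' ->
  (f b < f c) = (f b < f c') -> c = c'.
Proof.
move=> /consecP [h1 h2] /consecP [h1' h2'] hs.
apply: hf; case: (ltgtP (f c) (f c')) => // h.
- case: (ltgtP (f b) (f c)) hs => hbc hs.
  + by exfalso; apply: (h2' c); apply/btwP; left; rewrite hbc h.
  + exfalso; apply: (h2 c'); apply/btwP; right.
    have : ~~ (f b < f c') by rewrite -hs.
    rewrite -leNgt le_eqVlt => /orP [/eqP/hf e|->]; last by rewrite h.
    by move: h1'; rewrite e eqxx.
  + by move/hf: hbc => hbc; move: h1; rewrite hbc eqxx.
- case: (ltgtP (f b) (f c')) hs => hbc hs.
  + by exfalso; apply: (h2 c'); apply/btwP; left; rewrite hbc h.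
  + exfalso; apply: (h2' c); apply/btwP; right.
    have : ~~ (f b < f c) by rewrite hs.
    rewrite -leNgt le_eqVlt => /orP [/eqP/hf e|->]; last by rewrite h.
    by move: h1; rewrite e eqxx.
  + by move/hf: hbc => hbc; move: h1'; rewrite hbc eqxx.
Qed.

Definition bcnt a b := #|[set k | btw a b k]|.

Lemma bcnt_lt a b c : btw a b c -> ((bcnt a c < bcnt a b) /\ (bcnt c b < bcnt a b))%N.
Proof.
move=> hc; split; apply: proper_card; apply/properP; split.
- apply/subsetP => k; rewrite !inE => /btwP hk; apply/btwP.
  move/btwP: hc => hc; case: hc => hc; case: hk => hk; dA; [left|exfalso|exfalso|right]; try (apply/andP; split); lra.
- exists c; first by rewrite inE.
  by rewrite inE; apply/negP => /btwP [] hh; dA; lra.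
- apply/subsetP => k; rewrite !inE => /btwP hk; apply/btwP.
  move/btwP: hc => hc; case: hc => hc; case: hk => hk; dA; [left|exfalso|exfalso|right]; try (apply/andP; split); lra.
- exists c; first by rewrite inE.
  by rewrite inE; apply/negP => /btwP [] hh; dA; lra.
Qed.

Arguments bcnt_lt {a b c}.

Lemma btw_ind (P : 'I_n -> 'I_n -> Prop) :
  (forall a b, (forall c, btw a b c -> P a c /\ P c b) -> P a b) -> forall a b, P a b.
Proof.
move=> step a b.
move: {2}(bcnt a b) (leqnn (bcnt a b)) => m; elim: m a b => [|m IH] a b hm.
- apply: step => c hc; have [h1 _] := bcnt_lt hc; by rewrite leqn0 in hm; move/eqP: hm => hm; rewrite hm in h1.
- apply: step => c hc; have [h1 h2] := bcnt_lt hc; split; apply: IH; 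
  rewrite -ltnS; exact: leq_trans (h1) hm || exact: leq_trans (h2) hm.
Qed.

Lemma btw_neq {a b c} : btw a b c -> (a != c) /\ (b != c).
Proof.
move=> /btwP h; split; apply/negP => /eqP e; subst; case: h => hh; dA; lra.
Qed.

Lemma btw_side {a b c} : btw a b c -> (f a < f c) = (f a < f b).
Proof.
move=> /btwP [] hh; dA.
- by have -> : f a < f c by []; have -> : f a < f b by lra.
- have -> : (f a < f c) = false by apply/negbTE; rewrite -leNgt; lra.
  by apply/esym/negbTE; rewrite -leNgt; lra.
Qed.

Lemma consec_ex b d : b != d -> exists c, consec_x f b c /\ (f b < f c) = (f b < f d).
Proof.
move: b d; apply: btw_ind => b d IH hbd.
case: (boolP [exists c, btw b d c]) => [/existsP [c hc] | hno].
- have [IH1 _] := IH c hc.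
  have [hbc _] := btw_neq hc.
  have [e [he1 he2]] := IH1 hbc.
  by exists e; split => //; rewrite he2 (btw_side hc).
- exists d; split => //; apply/consecP; split => // c hc.
  by move/negP: hno; apply; apply/existsP; exists c.
Qed.

Lemma consec_far b c d : consec_x f b c -> (f b < f c) = (f b < f d) -> d != b ->
  (f b < f c -> f c <= f d) /\ (f c < f b -> f d <= f c).
Proof.
move=> /consecP [h1 h2] hs hdb; have hdb' := fneq hdb.
split => h.
- rewrite leNgt; apply/negP => h'; apply: (h2 d); apply/btwP; left.
  have hd : f b < f d by rewrite -hs.
  by apply/andP; split.
- rewrite leNgt; apply/negP => h'; apply: (h2 d); apply/btwP; right.
  have : ~~ (f b < f d) by rewrite -hs -leNgt ltW.
  rewrite -leNgt => hdb2; apply/andP; split => //.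
  by rewrite lt_neqAle hdb' hdb2.
Qed.
End Gen.
Arguments consec_sym {R n f a b}.
Arguments consec_uniq {R n f} hf {b c c'}.
Arguments consec_far {R n f} hf {b c d}.
Arguments consec_ex {R n f} hf {b d}.
Arguments btw_ind {R n f} P.
Arguments btw_neq {R n f a b c}.
Arguments btw_side {R n f a b c}.
Arguments fneq {R n f} hf {a b}.
Arguments btwP {R n f a b c}.
Arguments mmlt {R a b}.
Arguments mmgt {R a b}.
Arguments btw {R n} f a b c.
Arguments consecP {R n f} hf {a b}.


Section Main.
Variables (R : realFieldType) (n : nat) (x y : 'I_n -> R).
Hypotheses (hx : injective x) (hy : injective y).
Variable N : rel (vtx n).
Hypothesis hO : oriented_subnetwork x y N.

Lemma Nanti {u v} : N u v -> N v u -> False.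
Proof. by move=> h1 h2; have [_ /negP] := hO _ _ h1; apply. Qed.

Lemma dist1_tri p q r : dist1 x y p r <= dist1 x y p q + dist1 x y q r.
Proof.
rewrite /dist1.
have h1 := ler_distD (vx x q) (vx x p) (vx x r).
have h2 := ler_distD (vy y q) (vy y p) (vy y r).
lra.
Qed.

Lemma plen_ge p s : dist1 x y p (last p s) <= plen x y p s.
Proof.
elim: s p => [|v s IH] p /=.
- by rewrite /dist1 !subrr normr0 addr0.
- have h1 := IH v; have h2 := dist1_tri p v (last v s); lra.
Qed.

Lemma plen_rcons p s v : plen x y p (rcons s v) = plen x y p s + dist1 x y (last p s) v.
Proof. elim: s p => [|w s IH] p /=; first by rewrite add0r addr0. by rewrite IH addrA. Qed.

Lemma first_step p q : manhattan_path x y N p q -> p != q ->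
  exists v, N p v /\ dist1 x y p v + dist1 x y v q = dist1 x y p q.
Proof.
case=> -[|v s] [hp hl hlen] hpq /=; first by move: hpq; rewrite -hl /= eqxx.
move: hp => /= /andP [hpv _]; exists v; split => //.
move: hlen => /= hlen; rewrite /= in hl; have h1 := plen_ge v s; rewrite hl in h1.
have h2 := dist1_tri p v q; lra.
Qed.

Lemma last_step p q : manhattan_path x y N p q -> p != q ->
  exists u, N u q /\ dist1 x y p u + dist1 x y u q = dist1 x y p q.
Proof.
case=> s [hp hl hlen] hpq; case/lastP: s hp hl hlen => [|s w] hp hl hlen.
- by move: hpq; rewrite -hl /= eqxx.
- rewrite last_rcons in hl; subst w.
  move: hp; rewrite rcons_path => /andP [_ hu].
  exists (last p s); split => //.
  move: hlen; rewrite plen_rcons => hlen; have h1 := plen_ge p s.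
  have h2 := dist1_tri p (last p s) q; lra.
Qed.

Lemma split_box p v q : dist1 x y p v + dist1 x y v q = dist1 x y p q ->
  `|vx x p - vx x v| + `|vx x v - vx x q| = `|vx x p - vx x q| /\
  `|vy y p - vy y v| + `|vy y v - vy y q| = `|vy y p - vy y q|.
Proof.
rewrite /dist1 => h.
have h1 := ler_distD (vx x v) (vx x p) (vx x q).
have h2 := ler_distD (vy y v) (vy y p) (vy y q).
split; lra.
Qed.

Lemma absC (z : R) : (0 <= z /\ `|z| = z) \/ (z < 0 /\ `|z| = - z).
Proof.
case: (lerP 0 z) => h; [left; split => //; exact: ger0_norm | right; split => //; exact: ltr0_norm].
Qed.

Lemma side_abs (a c d : R) : `|a - c| + `|c - d| = `|a - d| -> c != a -> (a < c) = (a < d).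
Proof.
move=> h hca; have hca' : c <> a by move/eqP: hca.
case: (absC (a - c)) => -[h1 e1]; case: (absC (c - d)) => -[h2 e2];
case: (absC (a - d)) => -[h3 e3]; rewrite e1 e2 e3 in h;
case: (ltP a c) => h4; case: (ltP a d) => h5 //; exfalso; lra.
Qed.

Arguments first_step {p q}. Arguments last_step {p q}. Arguments split_box {p v q}. Arguments side_abs {a c d}.

Lemma term_neq {b k : 'I_n} : k != b -> term k != term b.
Proof. by apply: contra => /eqP [->]. Qed.

Lemma PL1 b k c r : k != b -> consec_x x b c -> (x b < x c) = (x b < x k) ->
  consec_y y b r -> (y b < y r) = (y b < y k) ->
  N (c, b) (b, b) -> N (b, r) (b, b) -> ~ manhattan_path x y N (term b) (term k).
Proof.
move=> hkb hc hcs hr hrs Nc Nr hp.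
have hbk : b != k by rewrite eq_sym.
have [v [Nv hv]] := first_step hp (term_neq hbk).
have [hg _] := hO _ _ Nv; have [ex ey] := split_box hv; clear hv.
move: v hg ex ey Nv => [v1 v2] [[/= <- hv1]|[/= <- hv2]] ex ey Nv.
- have [hne _] := hv1.
  have hne' : x v1 != x b by rewrite eq_sym.
  have hs := side_abs ex hne'.
  have hs' : (x b < x c) = (x b < x v1) by rewrite hcs -hs.
  have ec := consec_uniq hx hc hv1 hs'.
  by subst; rewrite /term in Nv; exact: (Nanti Nv Nc).
- have [hne _] := hv2.
  have hne' : y v2 != y b by rewrite eq_sym.
  have hs := side_abs ey hne'.
  have hs' : (y b < y r) = (y b < y v2) by rewrite hrs -hs.
  have ec := consec_uniq hy hr hv2 hs'.
  by subst; rewrite /term in Nv; exact: (Nanti Nv Nr).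
Qed.

Lemma PL2 b k c r : k != b -> consec_x x b c -> (x b < x c) = (x b < x k) ->
  consec_y y b r -> (y b < y r) = (y b < y k) ->
  N (b, b) (c, b) -> N (b, b) (b, r) -> ~ manhattan_path x y N (term k) (term b).
Proof.
move=> hkb hc hcs hr hrs Nc Nr hp.
have [v [Nv hv]] := last_step hp (term_neq hkb).
have [hg _] := hO _ _ Nv; have [ex ey] := split_box hv; clear hv.
move: v hg ex ey Nv => [v1 v2] [[/= -> hv1]|[/= -> hv2]] ex ey Nv.
- have hv1' := consec_sym hv1; have [hne _] := hv1'.
  rewrite /= addrC (distrC (x k) (x v1)) (distrC (x v1) (x b)) (distrC (x k) (x b)) in ex.
  have hne' : x v1 != x b by rewrite eq_sym.
  have hs := side_abs ex hne'.
  have hs' : (x b < x c) = (x b < x v1) by rewrite hcs -hs.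
  have ec := consec_uniq hx hc hv1' hs'.
  by subst; rewrite /term in Nv; exact: (Nanti Nv Nc).
- have hv2' := consec_sym hv2; have [hne _] := hv2'.
  rewrite /= addrC (distrC (y k) (y v2)) (distrC (y v2) (y b)) (distrC (y k) (y b)) in ey.
  have hne' : y v2 != y b by rewrite eq_sym.
  have hs := side_abs ey hne'.
  have hs' : (y b < y r) = (y b < y v2) by rewrite hrs -hs.
  have ec := consec_uniq hy hr hv2' hs'.
  by subst; rewrite /term in Nv; exact: (Nanti Nv Nr).
Qed.

End Main.
Arguments Nanti {R n x y N} hO {u v}.
Arguments PL1 {R n x y} hx hy {N} hO {b k c r}.
Arguments PL2 {R n x y} hx hy {N} hO {b k c r}.


Section Main2.
Variables (R : realFieldType) (n : nat) (x y : 'I_n -> R).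
Hypotheses (hx : injective x) (hy : injective y).
Variable N : rel (vtx n).
Hypothesis hO : oriented_subnetwork x y N.

Definition Hs i j := (pos_slope x y i j /\ boundary_ccw x y N i j) \/
                     (~ pos_slope x y i j /\ boundary_cw x y N i j).
Definition Vs i j := (pos_slope x y i j /\ boundary_cw x y N i j) \/
                     (~ pos_slope x y i j /\ boundary_ccw x y N i j).

Lemma posP b j : x b != x j -> y b != y j ->
  pos_slope x y b j <-> ((x b < x j) = (y b < y j)).
Proof.
move=> h1 h2; rewrite /pos_slope.
case: (ltgtP (x b) (x j)) h1 => // hx1 _; case: (ltgtP (y b) (y j)) h2 => // hy1 _;
split => // h; try nra.
Qed.

Lemma side_lt {a c d : R} : (a < c) = (a < d) -> c != a -> d != a ->
  (a < c /\ a < d) \/ (c < a /\ d < a).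
Proof.
move=> h hc hd; case: (ltgtP a c) h => hac h.
- by left; split.
- right; split => //; case: (ltgtP a d) h => // had _. by move: hd; rewrite had eqxx.
- by move: hc; rewrite hac eqxx.
Qed.

Ltac solve_ccw m1 M1 m2 M2 :=
  rewrite /ccw_side /vx /vy /= ?m1 ?M1 ?m2 ?M2;
  solve [ apply: Or41; split; [done|done|lra|split; lra]
        | apply: Or42; split; [done|done|lra|split; lra]
        | apply: Or43; split; [done|done|lra|split; lra]
        | apply: Or44; split; [done|done|lra|split; lra] ].

Lemma EL b j c r : j != b -> consec_x x b c -> (x b < x c) = (x b < x j) ->
  consec_y y b r -> (y b < y r) = (y b < y j) ->
  (Hs b j -> N (b, b) (c, b) /\ N (b, r) (b, b)) /\
  (Vs b j -> N (c, b) (b, b) /\ N (b, b) (b, r)).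
Proof.
move=> hjb hc hcs hr hrs.
have hxj : x j != x b := fneq hx hjb.
have hyj : y j != y b := fneq hy hjb.
have [fc1 fc2] := consec_far hx hc hcs hjb.
have [fr1 fr2] := consec_far hy hr hrs hjb.
have hxc : x c != x b by case: hc; rewrite eq_sym.
have hyr : y r != y b by case: hr; rewrite eq_sym.
have g1 : grid_edge x y (b, b) (c, b) by left; split.
have g2 : grid_edge x y (c, b) (b, b) by left; split => //; exact: consec_sym.
have g3 : grid_edge x y (b, r) (b, b) by right; split => //; exact: consec_sym.
have g4 : grid_edge x y (b, b) (b, r) by right; split.
case: (side_lt hcs hxc hxj) => -[hb1 hb2]; case: (side_lt hrs hyr hyj) => -[hb3 hb4];
(first [have [m1 M1] := @mmlt _ (x b) (x j) hb2 | have [m1 M1] := @mmgt _ (x b) (x j) hb2]);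
(first [have [m2 M2] := @mmlt _ (y b) (y j) hb4 | have [m2 M2] := @mmgt _ (y b) (y j) hb4]);
(first [have f1 := fc1 hb1 | have f1 := fc2 hb1]);
(first [have f2 := fr1 hb3 | have f2 := fr2 hb3]);
(first [have e1 : (x b < x j) = true by [] | have e1 := lt_gtF hb2]);
(first [have e2 : (y b < y j) = true by [] | have e2 := lt_gtF hb4]);
have hP : pos_slope x y b j <-> ((x b < x j) = (y b < y j)) by apply: posP; rewrite eq_sym.
all: split; rewrite /Hs /Vs; move=> [[hp hb]|[hp hb]].
all: try (exfalso; apply: hp; apply/hP; by rewrite e1 e2).
all: try (exfalso; move/hP: hp; by rewrite e1 e2).
all: clear - m1 M1 m2 M2 hb hb1 hb2 hb3 hb4 f1 f2 g1 g2 g3 g4.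
all: split; apply: hb; [assumption | solve_ccw m1 M1 m2 M2 | assumption | solve_ccw m1 M1 m2 M2].
Qed.


End Main2.
Arguments Hs {R n} x y N i j.
Arguments Vs {R n} x y N i j.
Arguments EL {R n x y} hx hy {N b j c r}.
Arguments posP {R n x y b j}.


Section Main3.
Variables (R : realFieldType) (n : nat) (x y : 'I_n -> R).
Hypotheses (hx : injective x) (hy : injective y).
Variable N : rel (vtx n).
Hypothesis hO : oriented_subnetwork x y N.
Hypothesis hM : forall t t', t != t' -> manhattan_path x y N (term t) (term t').

Lemma ccw_sym i j u v : ccw_side x y j i u v = ccw_side x y i j u v.
Proof. by rewrite /ccw_side (minC (x j)) (maxC (x j)) (minC (y j)) (maxC (y j)). Qed.

Lemma pos_sym i j : pos_slope x y j i <-> pos_slope x y i j.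
Proof.
rewrite /pos_slope; have -> : (x j - x i) * (y j - y i) = (x i - x j) * (y i - y j) by ring.
by [].
Qed.

Lemma Hs_sym i j : Hs x y N i j -> Hs x y N j i.
Proof.
rewrite /Hs /boundary_ccw /boundary_cw => -[[p h]|[p h]]; [left|right]; split.
- by apply/pos_sym.
- by move=> u v g; rewrite ccw_sym; exact: h.
- by move/pos_sym.
- by move=> u v g; rewrite ccw_sym; exact: h.
Qed.

Lemma Vs_sym i j : Vs x y N i j -> Vs x y N j i.
Proof.
rewrite /Vs /boundary_ccw /boundary_cw => -[[p h]|[p h]]; [left|right]; split.
- by apply/pos_sym.
- by move=> u v g; rewrite ccw_sym; exact: h.
- by move/pos_sym.
- by move=> u v g; rewrite ccw_sym; exact: h.
Qed.

Lemma nbrs {b j} : j != b -> exists c r, [/\ consec_x x b c, (x b < x c) = (x b < x j),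
  consec_y y b r & (y b < y r) = (y b < y j)].
Proof.
move=> hj; have hb : b != j by rewrite eq_sym.
have [c [hc hcs]] := consec_ex hx hb.
have [r [hr hrs]] := consec_ex hy hb.
by exists c, r.
Qed.

Lemma T0x b j l : j != b -> l != b -> (x b < x j) = (x b < x l) ->
  Hs x y N b j -> Vs x y N b l -> False.
Proof.
move=> hj hl hs Hj Vl.
have [c [r [hc hcs hr hrs]]] := nbrs hj.
have [c' [r' [hc' hcs' hr' hrs']]] := nbrs hl.
have [h1 _] := (EL hx hy hj hc hcs hr hrs).1 Hj.
have hcs2 : (x b < x c) = (x b < x l) by rewrite hcs.
have [h2 _] := (EL hx hy hl hc hcs2 hr' hrs').2 Vl.
exact: (@Nanti _ _ x y N hO _ _ h1 h2).
Qed.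

Lemma T0y b j l : j != b -> l != b -> (y b < y j) = (y b < y l) ->
  Hs x y N b j -> Vs x y N b l -> False.
Proof.
move=> hj hl hs Hj Vl.
have [c [r [hc hcs hr hrs]]] := nbrs hj.
have [c' [r' [hc' hcs' hr' hrs']]] := nbrs hl.
have [_ h1] := (EL hx hy hj hc hcs hr hrs).1 Hj.
have hrs2 : (y b < y r) = (y b < y l) by rewrite hrs.
have [_ h2] := (EL hx hy hl hc' hcs' hr hrs2).2 Vl.
exact: (@Nanti _ _ x y N hO _ _ h1 h2).
Qed.

Lemma Topp b j l k : j != b -> l != b -> k != b ->
  ((x b < x k) = (x b < x j) /\ (y b < y k) = (y b < y l)) \/
  ((x b < x k) = (x b < x l) /\ (y b < y k) = (y b < y j)) ->
  Hs x y N b j -> Vs x y N b l -> False.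
Proof.
move=> hj hl hk hcase Hj Vl.
have [c [r [hc hcs hr hrs]]] := nbrs hj.
have [c' [r' [hc' hcs' hr' hrs']]] := nbrs hl.
have [Hc Hr] := (EL hx hy hj hc hcs hr hrs).1 Hj.
have [Vc Vr] := (EL hx hy hl hc' hcs' hr' hrs').2 Vl.
case: hcase => -[e1 e2].
- have hk1 : (x b < x c) = (x b < x k) by rewrite hcs e1.
  have hk2 : (y b < y r') = (y b < y k) by rewrite hrs' e2.
  apply: (PL2 hx hy hO hk hc hk1 hr' hk2 Hc Vr); apply: hM; exact: hk.
- have hk1 : (x b < x c') = (x b < x k) by rewrite hcs' e1.
  have hk2 : (y b < y r) = (y b < y k) by rewrite hrs e2.
  apply: (PL1 hx hy hO hk hc' hk1 hr hk2 Vc Hr); apply: hM; by rewrite eq_sym.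
Qed.

Definition interior b := ~ inP24 x y b /\ ~ inP13 x y b.

Lemma notP24 {b} : ~ inP24 x y b -> exists k, k != b /\ (inQ2 x y b k \/ inQ4 x y b k).
Proof.
move=> h; apply: NNPP => hn; apply: h => k hk.
apply/eqP; apply: NNPP => hkb; apply: hn; exists k; split => //; exact/negP.
Qed.

Lemma notP13 {b} : ~ inP13 x y b -> exists k, k != b /\ (inQ1 x y b k \/ inQ3 x y b k).
Proof.
move=> h; apply: NNPP => hn; apply: h => k hk.
apply/eqP; apply: NNPP => hkb; apply: hn; exists k; split => //; exact/negP.
Qed.

Lemma sideP {a d : R} : a != d -> ((a < d) = true /\ a < d) \/ ((a < d) = false /\ d < a).
Proof.
move=> h; case: (ltgtP a d) => hh; [left|right|] => //.
by move: h; rewrite hh eqxx.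
Qed.

Lemma T_any b j l : interior b -> j != b -> l != b ->
  Hs x y N b j -> Vs x y N b l -> False.
Proof.
move=> [h24 h13] hj hl Hj Vl.
case: (boolP ((x b < x j) == (x b < x l))) => [/eqP e|ne1]; first exact: T0x hj hl e Hj Vl.
case: (boolP ((y b < y j) == (y b < y l))) => [/eqP e|ne2]; first exact: T0y hj hl e Hj Vl.
have E3 : (x b < x l) = ~~ (x b < x j) by move: ne1; case: (x b < x j); case: (x b < x l).
have E4 : (y b < y l) = ~~ (y b < y j) by move: ne2; case: (y b < y j); case: (y b < y l).
have kfacts : exists k, k != b /\ (((x b < x j) == (y b < y j)) ==
     ((x b < x k) == ~~ (y b < y k))).
  case: (boolP ((x b < x j) == (y b < y j))) => hq.
  - have [k [hk hq2]] := notP24 h24; exists k; split => //.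
    have := fneq hx hk; have := fneq hy hk; rewrite eq_sym => nx; rewrite eq_sym => ny.
    case: (sideP nx) => -[ex1 ex2]; case: (sideP ny) => -[ey1 ey2]; rewrite ex1 ey1 //;
    case: hq2 => -[q1 q2]; lra.
  - have [k [hk hq2]] := notP13 h13; exists k; split => //.
    have := fneq hx hk; have := fneq hy hk; rewrite eq_sym => nx; rewrite eq_sym => ny.
    case: (sideP nx) => -[ex1 ex2]; case: (sideP ny) => -[ey1 ey2]; rewrite ex1 ey1 //=;
    try (rewrite (negbTE hq) //); case: hq2 => -[q1 q2]; lra.
have [k [hk hkk]] := kfacts.
apply: (@Topp b j l k hj hl hk _ Hj Vl); rewrite E3 E4.
move: hkk; case: (x b < x j); case: (y b < y j); case: (x b < x k); case: (y b < y k) => //= _;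
  by [left | right].
Qed.

End Main3.
Arguments interior {R n} x y b.
Arguments T_any {R n x y} hx hy {N} hO hM {b j l}.
Arguments Hs_sym {R n x y N i j}.
Arguments Vs_sym {R n x y N i j}.
Arguments T0x {R n x y} hx hy {N} hO {b j l}.
Arguments sideP {R a d}.


Section Main4.
Variables (R : realFieldType) (n : nat) (x y : 'I_n -> R).
Hypotheses (hx : injective x) (hy : injective y).
Variable N : rel (vtx n).
Hypothesis hO : oriented_subnetwork x y N.
Hypothesis hM : forall t t', t != t' -> manhattan_path x y N (term t) (term t').
Hypothesis hstrips : forall i j, strip x y i j -> boundary_directed_cycle x y N i j.

Lemma strip_HV {i j} : strip x y i j -> Hs x y N i j \/ Vs x y N i j.
Proof.
move/hstrips; rewrite /Hs /Vs; case: (boolP (0 < (x i - x j) * (y i - y j))) => hp.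
- by case=> h; [left; left|right; left]; split.
- have hp' : ~ pos_slope x y i j by rewrite /pos_slope; apply/negP.
  by case=> h; [right; right|left; right]; split.
Qed.

Lemma mm_btw {a b z : R} : (a < z < b) \/ (b < z < a) -> Num.min a b <= z <= Num.max a b.
Proof.
case: (ltgtP a b) => h [] /andP [h1 h2]; apply/andP; split; lra.
Qed.

Lemma mm_ends {a b z : R} : Num.min a b <= z <= Num.max a b ->
  ~ (Num.min a b < z < Num.max a b) -> z = a \/ z = b.
Proof.
case: (ltgtP a b) => h /andP [h1 h2] hn.
- case: (ltgtP z a) => e; [lra| |by left].
  case: (ltgtP z b) => e'; [|lra|by right].
  by exfalso; apply: hn; apply/andP; split.
- case: (ltgtP z b) => e; [lra| |by right].
  case: (ltgtP z a) => e'; [|lra|by left].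
  by exfalso; apply: hn; apply/andP; split.
- left; lra.
Qed.

Lemma strip_of_consec {a b} : consec_x x a b -> strip x y a b.
Proof.
move=> hc; left; split => //; split.
- by case/consecP: hc.
- move=> k [hk _]; have [_ hn] := hc.
  by case: (mm_ends hk (hn k)) => /hx ->; [left|right].
Qed.

Lemma strip_neq {i j} : strip x y i j -> i != j.
Proof. by case=> -[[h _] _]. Qed.

Lemma strip_empty {i j} : strip x y i j -> empty_rect x y i j.
Proof. by case=> -[h _]. Qed.

Definition BI (B : {set 'I_n}) := forall i j k, i \in B -> j \in B -> x i <= x k <= x j -> k \in B.
Definition BE (B : {set 'I_n}) := forall b, b \in B -> ~ interior x y b ->
  (forall k, k \in B -> x b <= x k) \/ (forall k, k \in B -> x k <= x b).

Lemma chain B : BI B -> BE B -> forall a b, a \in B -> b \in B -> interior x y a -> interior x y b ->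
  forall j l, j != a -> l != b -> Hs x y N a j -> Vs x y N b l -> False.
Proof.
move=> hBI hBE; apply: (btw_ind (f:=x) (fun a b => a \in B -> b \in B -> interior x y a -> interior x y b ->
  forall j l, j != a -> l != b -> Hs x y N a j -> Vs x y N b l -> False)).
move=> a b IH ha hb ia ib j l hj hl Ha Vb.
case: (boolP [exists c, btw x a b c]) => [/existsP [c hc]|hno].
- have hcB : c \in B.
    case: (btwP.1 hc) => /andP [h1 h2].
    + by apply: (hBI a b) => //; apply/andP; split; apply: ltW.
    + by apply: (hBI b a) => //; apply/andP; split; apply: ltW.
  have ic : interior x y c.
    apply: NNPP => nic; case: (hBE c hcB nic) => hh; have h1 := hh a ha; have h2 := hh b hb;
    case: (btwP.1 hc) => /andP [h3 h4]; lra.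
  have [hac _] := btw_neq hc.
  have hca : c != a by rewrite eq_sym.
  have [e [he _]] := consec_ex hx hca.
  have hec : e != c by have [h _] := (consecP hx).1 he; rewrite eq_sym.
  have [IH1 IH2] := IH c hc.
  case: (strip_HV (strip_of_consec he)) => He.
  + exact: (IH2 hcB hb ic ib e l hec hl He Vb).
  + exact: (IH1 ha hcB ia ic j e hj hec Ha He).
- case: (eqVneq a b) => [eab|nab].
  + by subst; exact: (T_any hx hy hO hM ia hj hl Ha Vb).
  + have hab : consec_x x a b.
      apply/(consecP hx); split => // c hc; move/negP: hno; apply; apply/existsP; exists c; exact: hc.
    case: (strip_HV (strip_of_consec hab)) => H.
    * have hba : a != b := nab.
      exact: (T_any hx hy hO hM ib hba hl (Hs_sym H) Vb).
    * have hba : b != a by rewrite eq_sym.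
      exact: (T_any hx hy hO hM ia hj hba Ha H).
Qed.

End Main4.
Arguments strip_HV {R n x y N} hstrips {i j}.
Arguments strip_of_consec {R n x y} hx {a b}.
Arguments strip_neq {R n x y i j}.
Arguments strip_empty {R n x y i j}.
Arguments chain {R n x y} hx hy {N} hO hM hstrips {B}.
Arguments mm_btw {R a b z}.
Arguments mm_ends {R a b z}.
Arguments BI {R n} x B. Arguments BE {R n} x y B.

Section Main5.
Variables (R : realFieldType) (n : nat) (x y : 'I_n -> R).
Hypotheses (hx : injective x) (hy : injective y).

Lemma lt_neq_le (a b : R) : a <= b -> a != b -> a < b.
Proof. by move=> h1 h2; rewrite lt_neqAle h2. Qed.

Lemma lt_flip {a b : R} : false = (a < b) -> a != b -> b < a.
Proof. move=> h hn; case: (ltgtP a b) h hn => // ->; by rewrite eqxx. Qed.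

Lemma ne_x {i j} : i != j -> x i != x j. Proof. exact: (fneq hx). Qed.
Lemma ne_y {i j} : i != j -> y i != y j. Proof. exact: (fneq hy). Qed.

Lemma P24_P13 p q : inP24 x y p -> inP13 x y q -> p = q.
Proof.
move=> hp hq.
case: (lerP (x p) (x q)) => h1; case: (lerP (y p) (y q)) => h2.
- by apply: hq; right; split.
- by apply/esym/hp; right; split => //; apply: ltW.
- by apply/esym/hp; left; split => //; apply: ltW.
- by apply: hq; left; split; apply: ltW.
Qed.

Lemma nonint {b} : ~ interior x y b -> inP24 x y b \/ inP13 x y b.
Proof. move=> h; apply: NNPP => h'; apply: h; split => hh; apply: h'; by [left|right]. Qed.

Lemma P24_rel {p c} : inP24 x y p -> c != p -> (x p < x c) = (y p < y c).
Proof.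
move=> hp hcp; have nx : x p != x c by rewrite eq_sym; exact: ne_x.
have ny : y p != y c by rewrite eq_sym; exact: ne_y.
case: (sideP nx) => -[e1 h1]; case: (sideP ny) => -[e2 h2]; rewrite e1 e2 //.
- by exfalso; move/eqP: hcp; apply; apply: hp; right; split; apply: ltW.
- by exfalso; move/eqP: hcp; apply; apply: hp; left; split; apply: ltW.
Qed.

Lemma P13_rel {p c} : inP13 x y p -> c != p -> (x p < x c) = (y c < y p).
Proof.
move=> hp hcp; have nx : x p != x c by rewrite eq_sym; exact: ne_x.
have ny : y c != y p by exact: ne_y.
case: (sideP nx) => -[e1 h1]; case: (sideP ny) => -[e2 h2]; rewrite e1 e2 //.
- by exfalso; move/eqP: hcp; apply; apply: hp; left; split; apply: ltW.
- by exfalso; move/eqP: hcp; apply; apply: hp; right; split; apply: ltW.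
Qed.

Lemma no_btw_nonint i j : strip x y i j -> ~ interior x y i -> ~ interior x y j ->
  forall c, ~ btw x i j c.
Proof.
move=> hs ni nj c hc.
have hij := strip_neq hs.
have [_ hemp] := strip_empty hs.
have [hic hjc] := btw_neq hc.
have hci : c != i by rewrite eq_sym.
have hcj : c != j by rewrite eq_sym.
have hin : in_rect x y i j (x c) (y c) -> False.
  by move/hemp => [] e; [move: hci|move: hcj]; rewrite e eqxx.
apply: hin; split; first exact: mm_btw (btwP.1 hc).
apply: mm_btw.
case: (nonint ni) => hi; case: (nonint nj) => hj.
- have e1 := P24_rel hi hci; have e2 := P24_rel hj hcj.
  case: (btwP.1 hc) => /andP [h1 h2]; [left|right]; apply/andP; split.
  + by rewrite -e1.
  + by move: e2; rewrite (lt_gtF h2) => e; apply: (lt_flip e); exact: ne_y.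
  + by rewrite -e2.
  + by move: e1; rewrite (lt_gtF h2) => e; apply: (lt_flip e); exact: ne_y.
- by exfalso; move/eqP: hij; apply; apply: P24_P13.
- by exfalso; move/eqP: hij; apply; symmetry; apply: P24_P13.
- have e1 := P13_rel hi hci; have e2 := P13_rel hj hcj.
  case: (btwP.1 hc) => /andP [h1 h2]; [right|left]; apply/andP; split.
  + by move: e2; rewrite (lt_gtF h2) => e; apply: (lt_flip e); exact: ne_y.
  + by rewrite -e1.
  + by move: e1; rewrite (lt_gtF h2) => e; apply: (lt_flip e); exact: ne_y.
  + by rewrite -e2.
Qed.

End Main5.
Arguments P24_P13 {R n x y p q}.
Arguments nonint {R n x y b}.
Arguments no_btw_nonint {R n x y} hx hy {i j}.
Arguments lt_flip {R a b}.
Arguments P24_rel {R n x y} hx hy {p c}. Arguments P13_rel {R n x y} hx hy {p c}.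

Section Main6.
Variables (R : realFieldType) (n : nat) (x y : 'I_n -> R).
Hypotheses (hx : injective x) (hy : injective y).
Variable N : rel (vtx n).
Hypothesis hO : oriented_subnetwork x y N.
Hypothesis hM : forall t t', t != t' -> manhattan_path x y N (term t) (term t').
Hypothesis hstrips : forall i j, strip x y i j -> boundary_directed_cycle x y N i j.

Lemma pair_cover B i j : BE x y B -> strip x y i j -> i \in B -> j \in B ->
  ~ interior x y i -> ~ interior x y j -> forall k, k \in B -> k = i \/ k = j.
Proof.
move=> hBE hs hi hj ni nj k hk.
have hnb := no_btw_nonint hx hy hs ni nj k.
have hij := strip_neq hs.
have nx : x i != x j := fneq hx hij.
clear hij.
case: (hBE i hi ni) => ei; case: (hBE j hj nj) => ej;
have ei1 := ei k hk; have ej1 := ej k hk; have ei2 := ei j hj; have ej2 := ej i hi.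
- by exfalso; move: nx; rewrite eq_le ei2 ej2.
- case: (ltgtP (x k) (x i)) => h1; first (by move: ei1; rewrite leNgt h1); last by left; apply: hx.
  case: (ltgtP (x k) (x j)) => h2; last (by right; apply: hx); last (by move: ej1; rewrite leNgt h2).
  by exfalso; apply: hnb; apply/btwP; left; rewrite h1 h2.
- case: (ltgtP (x k) (x j)) => h1; first (by move: ej1; rewrite leNgt h1); last by right; apply: hx.
  case: (ltgtP (x k) (x i)) => h2; last (by left; apply: hx); last (by move: ei1; rewrite leNgt h2).
  by exfalso; apply: hnb; apply/btwP; right; rewrite h1 h2.
- by exfalso; move: nx; rewrite eq_le ei2 ej2.
Qed.

Lemma same_rect i j k l : i != j ->
  (i = k /\ j = l) \/ (i = l /\ j = k) -> Hs x y N i j -> Vs x y N k l -> False.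
Proof.
move=> hij hc H V; have hji : j != i by rewrite eq_sym.
case: hc => -[e1 e2]; subst.
- exact: (T0x hx hy hO hji hji (erefl _) H V).
- exact: (T0x hx hy hO hji hji (erefl _) H (Vs_sym V)).
Qed.

Lemma endpoint_H (B : {set 'I_n}) i j : strip x y i j -> i \in B -> j \in B -> Hs x y N i j ->
  (exists a j', [/\ a \in B, interior x y a, j' != a & Hs x y N a j']) \/
  (~ interior x y i /\ ~ interior x y j).
Proof.
move=> hs hi hj H; have hij := strip_neq hs.
case: (classic (interior x y i)) => ii.
- by left; exists i, j; split => //; rewrite eq_sym.
- case: (classic (interior x y j)) => ij; last by right.
  by left; exists j, i; split => //; exact: Hs_sym.
Qed.

Lemma endpoint_V (B : {set 'I_n}) i j : strip x y i j -> i \in B -> j \in B -> Vs x y N i j ->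
  (exists a j', [/\ a \in B, interior x y a, j' != a & Vs x y N a j']) \/
  (~ interior x y i /\ ~ interior x y j).
Proof.
move=> hs hi hj H; have hij := strip_neq hs.
case: (classic (interior x y i)) => ii.
- by left; exists i, j; split => //; rewrite eq_sym.
- case: (classic (interior x y j)) => ij; last by right.
  by left; exists j, i; split => //; exact: Vs_sym.
Qed.

Lemma core B : BI x B -> BE x y B -> forall i j k l, i \in B -> j \in B -> k \in B -> l \in B ->
  strip x y i j -> strip x y k l -> Hs x y N i j -> Vs x y N k l -> False.
Proof.
move=> hBI hBE i j k l hi hj hk hl s1 s2 H V.
have hij := strip_neq s1; have hkl := strip_neq s2.
case: (@endpoint_H B i j s1 hi hj H) => [[a [j' [ha ia hja Ha]]]|[ni nj]].
- case: (@endpoint_V B k l s2 hk hl V) => [[b [l' [hb ib hlb Vb]]]|[nk nl]].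
  + exact: (chain hx hy hO hM hstrips hBI hBE a b ha hb ia ib j' l' hja hlb Ha Vb).
  + have c1 := @pair_cover B k l hBE s2 hk hl nk nl.
    apply: (@same_rect i j k l hij _ H V).
    case: (c1 i hi) => ei; case: (c1 j hj) => ej; subst.
    * by move: hij; rewrite eqxx.
    * by left.
    * by right.
    * by move: hij; rewrite eqxx.
- have c1 := @pair_cover B i j hBE s1 hi hj ni nj.
  apply: (@same_rect i j k l hij _ H V).
  case: (c1 k hk) => ek; case: (c1 l hl) => el; subst.
  * by move: hkl; rewrite eqxx.
  * by left.
  * by right.
  * by move: hkl; rewrite eqxx.
Qed.

End Main6.
Arguments core {R n x y} hx hy {N} hO hM hstrips {B}.

Section Main7.
Variables (R : realFieldType) (n : nat) (x y : 'I_n -> R).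
Hypotheses (hx : injective x) (hy : injective y).


Lemma ltF {a : R} : a < a -> False. Proof. by rewrite ltxx. Qed.

Lemma block_ok B : is_block x y B -> BI x B /\ BE x y B.
Proof.
case.
- move=> [ex24 hc]; case: hc.
  + move=> [p [[hp hmin] eB]]; subst B; split.
    * move=> i j k; rewrite !inE => /andP [hi1 hi2] /andP [hj1 hj2] /andP [h1 h2].
      apply/andP; split; first exact: le_trans h2 hj1.
      rewrite leNgt; apply/negP => hyk.
      have ekp : k = p by apply: hp; left; split => //; [exact: le_trans h2 hj1 | exact: ltW].
      by subst; move: hyk; rewrite ltxx.
    * move=> b; rewrite inE => /andP [hb1 hb2] nb.
      case: (nonint nb) => h.
      - by right => k; rewrite inE => /andP [hk1 _]; apply: le_trans hk1 (hmin b h).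
      - have e := P24_P13 hp h; subst b.
        by right => k; rewrite inE => /andP [hk1 _].
  + move=> [p [q [[hp hq hpq hnext] eB]]]; subst B.
    have hqp : q != p by apply/negP => /eqP e; move: hpq; rewrite e ltxx.
    have hypq : y p < y q by rewrite -(P24_rel hx hy hp hqp).
    have [m1 M1] := mmlt hpq; have [m2 M2] := mmlt hypq.
    rewrite /rect_set m1 M1 m2 M2; split.
    * move=> i j k; rewrite !inE => /andP [/andP [hi1 hi2] _] /andP [/andP [hj1 hj2] _] /andP [h1 h2].
      have hk1 : x p <= x k by exact: le_trans hi1 h1.
      have hk2 : x k <= x q by exact: le_trans h2 hj2.
      rewrite hk1 hk2 /=; apply/andP; split.
      - rewrite leNgt; apply/negP => hyk.
        have ekp : k = p by apply: hp; right; split => //; exact: ltW.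
        by subst; move: hyk; rewrite ltxx.
      - rewrite leNgt; apply/negP => hyk.
        have ekq : k = q by apply: hq; left; split => //; exact: ltW.
        by subst; move: hyk; rewrite ltxx.
    * move=> b; rewrite inE => /andP [/andP [hb1 hb2] _] nb.
      case: (nonint nb) => h.
      - have hn := hnext b h.
        case: (ltgtP (x p) (x b)) hb1 => e1 hb1.
        + case: (ltgtP (x b) (x q)) hb2 => e2 hb2.
          ** by exfalso; apply: hn; rewrite e1 e2.
          ** by move: hb2; rewrite ?leNgt ?e2.
          ** by right => k; rewrite inE => /andP [/andP [_ hk] _]; rewrite e2.
        + by move: hb1; rewrite ?leNgt ?e1.
        + by left => k; rewrite inE => /andP [/andP [hk _] _]; rewrite -e1.
      - have e := P24_P13 hp h; subst b.
        by left => k; rewrite inE => /andP [/andP [hk _] _].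
  + move=> [p [[hp hmax] eB]]; subst B; split.
    * move=> i j k; rewrite !inE => /andP [hi1 hi2] /andP [hj1 hj2] /andP [h1 h2].
      apply/andP; split; first exact: le_trans hi1 h1.
      rewrite leNgt; apply/negP => hyk.
      have ekp : k = p by apply: hp; right; split => //; [exact: le_trans hi1 h1 | exact: ltW].
      by subst; move: hyk; rewrite ltxx.
    * move=> b; rewrite inE => /andP [hb1 hb2] nb.
      case: (nonint nb) => h.
      - by left => k; rewrite inE => /andP [hk1 _]; apply: le_trans (hmax b h) hk1.
      - have e := P24_P13 hp h; subst b.
        by left => k; rewrite inE => /andP [hk1 _].
- move=> [n24 ex13 hc]; case: hc.
  + move=> [p [[hp hmin] eB]]; subst B; split.
    * move=> i j k; rewrite !inE => /andP [hi1 hi2] /andP [hj1 hj2] /andP [h1 h2].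
      apply/andP; split; first exact: le_trans h2 hj1.
      rewrite leNgt; apply/negP => hyk.
      have ekp : k = p by apply: hp; right; split => //; [exact: le_trans h2 hj1 | exact: ltW].
      by subst; move: hyk; rewrite ltxx.
    * move=> b; rewrite inE => /andP [hb1 hb2] nb.
      case: (nonint nb) => h; first by exfalso; apply: n24; exists b.
      by right => k; rewrite inE => /andP [hk1 _]; apply: le_trans hk1 (hmin b h).
  + move=> [p [q [[hp hq hpq hnext] eB]]]; subst B.
    have hqp : q != p by apply/negP => /eqP e; move: hpq; rewrite e ltxx.
    have hypq : y q < y p by rewrite -(P13_rel hx hy hp hqp).
    have [m1 M1] := mmlt hpq; have [m2 M2] := mmgt hypq.
    rewrite /rect_set m1 M1 m2 M2; split.
    * move=> i j k; rewrite !inE => /andP [/andP [hi1 hi2] _] /andP [/andP [hj1 hj2] _] /andP [h1 h2].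
      have hk1 : x p <= x k by exact: le_trans hi1 h1.
      have hk2 : x k <= x q by exact: le_trans h2 hj2.
      rewrite hk1 hk2 /=; apply/andP; split.
      - rewrite leNgt; apply/negP => hyk.
        have ekq : k = q by apply: hq; right; split => //; exact: ltW.
        by subst; move: hyk; rewrite ltxx.
      - rewrite leNgt; apply/negP => hyk.
        have ekp : k = p by apply: hp; left; split => //; exact: ltW.
        by subst; move: hyk; rewrite ltxx.
    * move=> b; rewrite inE => /andP [/andP [hb1 hb2] _] nb.
      case: (nonint nb) => h; first by exfalso; apply: n24; exists b.
      have hn := hnext b h.
      case: (ltgtP (x p) (x b)) hb1 => e1 hb1.
      - case: (ltgtP (x b) (x q)) hb2 => e2 hb2.
        + by exfalso; apply: hn; rewrite e1 e2.
        + by move: hb2; rewrite ?leNgt ?e2.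
        + by right => k; rewrite inE => /andP [/andP [_ hk] _]; rewrite e2.
      - by move: hb1; rewrite ?leNgt ?e1.
      - by left => k; rewrite inE => /andP [/andP [hk _] _]; rewrite -e1.
  + move=> [p [[hp hmax] eB]]; subst B; split.
    * move=> i j k; rewrite !inE => /andP [hi1 hi2] /andP [hj1 hj2] /andP [h1 h2].
      apply/andP; split; first exact: le_trans hi1 h1.
      rewrite leNgt; apply/negP => hyk.
      have ekp : k = p by apply: hp; left; split => //; [exact: le_trans hi1 h1 | exact: ltW].
      by subst; move: hyk; rewrite ltxx.
    * move=> b; rewrite inE => /andP [hb1 hb2] nb.
      case: (nonint nb) => h; first by exfalso; apply: n24; exists b.
      by left => k; rewrite inE => /andP [hk1 _]; apply: le_trans (hmax b h) hk1.
- move=> [n24 n13 eB]; subst B; split.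
  + by move=> i j k _ _ _; rewrite in_setT.
  + move=> b _ nb; case: (nonint nb) => h; exfalso; [apply: n24|apply: n13]; by exists b.
Qed.

End Main7.
Arguments block_ok {R n x y} hx hy {B}.

Theorem lemma4p1 (R : realFieldType) (n : nat) (x y : 'I_n -> R)
    (hx : injective x) (hy : injective y) (N : rel (vtx n))
    (hN : bidirected_manhattan x y N)
    (hstrips : forall i j, strip x y i j -> boundary_directed_cycle x y N i j)
    (B : {set 'I_n}) (hB : is_block x y B) :
  forall i j k l, i \in B -> j \in B -> k \in B -> l \in B ->
    strip x y i j -> strip x y k l -> compatible x y N i j k l.
Proof.
move=> i j k l hi hj hk hl s1 s2.
have [hO hM] := hN.
have [hBI hBE] := block_ok hx hy hB.
case: (strip_HV hstrips s1) => H1; case: (strip_HV hstrips s2) => H2.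
- rewrite /compatible; move: H1 H2; rewrite /Hs; tauto.
- by exfalso; exact: (core hx hy hO hM hstrips hBI hBE i j k l hi hj hk hl s1 s2 H1 H2).
- by exfalso; exact: (core hx hy hO hM hstrips hBI hBE k l i j hk hl hi hj s2 s1 H2 H1).
- rewrite /compatible; move: H1 H2; rewrite /Vs; tauto.
Qed.
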